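(* Consider the dynamic panel logit AR(1) model with $T=3$: binary outcomes $Y_0,Y_1,Y_2,Y_3\in\{0,1\}$, regressors $X=(X_1,X_2,X_3)\in\mathbb{R}^{K\times 3}$ and a scalar fixed effect $A\in\mathbb{R}$ such that, for $t\in\{1,2,3\}$, $$\Pr(Y_t=1\mid Y_0,\dots,Y_{t-1},X,A)=\frac{\exp(X_t'\beta_0+Y_{t-1}\gamma_0+A)}{1+\exp(X_t'\beta_0+Y_{t-1}\gamma_0+A)},$$ with true parameters $\beta_0\in\mathbb{R}^K$, $\gamma_0\in\mathbb{R}$. Write $x_{ts}=x_t-x_s$ and $y=(y_1,y_2,y_3)$. Define $$m_0^{(a)}(y,x,\beta,\gamma)=\begin{cases}\exp(x_{12}'\beta)&y=(0,1,0),\\ \exp(x_{13}'\beta-\gamma)&y=(0,1,1),\\ -1&(y_1,y_2)=(1,0),\\ \exp(x_{32}'\beta)-1&y=(1,1,0),\\0&\text{otherwise},\end{cases}\qquad m_0^{(b)}(y,x,\beta,\gamma)=\begin{cases}\exp(x_{23}'\beta)-1&y=(0,0,1),\\ -1&(y_1,y_2)=(0,1),\\ \exp(x_{31}'\beta)&y=(1,0,0),\\ \exp(\gamma+x_{21}'\beta)&y=(1,0,1),\\0&\text{otherwise},\end{cases}$$ $$m_1^{(a)}(y,x,\beta,\gamma)=\begin{cases}\exp(x_{12}'\beta+\gamma)&y=(0,1,0),\\ \exp(x_{13}'\beta)&y=(0,1,1),\\ -1&(y_1,y_2)=(1,0),\\ \exp(x_{32}'\beta)-1&y=(1,1,0),\\0&\text{otherwise},\end{cases}\qquad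 m_1^{(b)}(y,x,\beta,\gamma)=\begin{cases}\exp(x_{23}'\beta)-1&y=(0,0,1),\\ -1&(y_1,y_2)=(0,1),\\ \exp(x_{31}'\beta-\gamma)&y=(1,0,0),\\ \exp(x_{21}'\beta)&y=(1,0,1),\\0&\text{otherwise}.\end{cases}$$ Then for all $y_0\in\{0,1\}$, $x\in\mathbb{R}^{K\times 3}$ and $\alpha\in\mathbb{R}$, $$\mathbb{E}\big[m^{(a)}_{y_0}(Y,X,\beta_0,\gamma_0)\mid Y_0=y_0,X=x,A=\alpha\big]=0,\qquad \mathbb{E}\big[m^{(b)}_{y_0}(Y,X,\beta_0,\gamma_0)\mid Y_0=y_0,X=x,A=\alpha\big]=0,$$ where $Y=(Y_1,Y_2,Y_3)$.
   Context: The joint distribution of $(X,A)$ (and of $Y_0$) is unrestricted; only the conditional law of $(Y_1,Y_2,Y_3)$ given $(Y_0,X,A)$ is specified by the logit model above. The conditional expectation is thus $\sum_{y\in\{0,1\}^3}\prod_{t=1}^3\frac{1}{1+\exp[(1-2y_t)(x_t'\beta_0+y_{t-1}\gamma_0+\alpha)]}\,m_{y_0}(y,x,\beta_0,\gamma_0)$. *)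

(* Defs.v *)
From mathcomp Require Import all_boot all_order all_algebra.
From mathcomp Require Import reals. From mathcomp Require Import sequences exp.
Set Implicit Arguments. Unset Strict Implicit. Unset Printing Implicit Defensive.
Import Order.TTheory GRing.Theory Num.Theory.
Local Open Scope ring_scope.

Section Defs.
Variables (R : realType) (K : nat).

(* Periods t = 1,2,3 are the columns 0,1,2 of x : R^{K x 3}. *)
Definition per1 : 'I_3 := @Ordinal 3 0 erefl.
Definition per2 : 'I_3 := @Ordinal 3 1 erefl.
Definition per3 : 'I_3 := @Ordinal 3 2 erefl.

Definition xb (x : 'M[R]_(K, 3)) (beta : 'cV[R]_K) (t : 'I_3) : R :=
  \sum_(k < K) x k t * beta k 0.

Definition xdb (x : 'M[R]_(K, 3)) (beta : 'cV[R]_K) (t s : 'I_3) : R :=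
  \sum_(k < K) (x k t - x k s) * beta k 0.

Definition b2R (b : bool) : R := (b : nat)%:R.

(* 1 / (1 + exp((1 - 2 y_t) z)) : conditional probability of outcome y_t
   given index z = x_t' beta + y_{t-1} gamma + alpha. *)
Definition logitp (yt : bool) (z : R) : R :=
  1 / (1 + expR ((1 - 2 * b2R yt) * z)).

Definition pathprob (x : 'M[R]_(K, 3)) (beta : 'cV[R]_K) (gamma alpha : R)
  (y0 y1 y2 y3 : bool) : R :=
  logitp y1 (xb x beta per1 + b2R y0 * gamma + alpha) *
  logitp y2 (xb x beta per2 + b2R y1 * gamma + alpha) *
  logitp y3 (xb x beta per3 + b2R y2 * gamma + alpha).

Definition m0a (y1 y2 y3 : bool) (x : 'M[R]_(K, 3)) (beta : 'cV[R]_K) (gamma : R) : R :=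
  match y1, y2, y3 with
  | false, true, false => expR (xdb x beta per1 per2)
  | false, true, true => expR (xdb x beta per1 per3 - gamma)
  | true, false, _ => -1
  | true, true, false => expR (xdb x beta per3 per2) - 1
  | _, _, _ => 0
  end.

Definition m0b (y1 y2 y3 : bool) (x : 'M[R]_(K, 3)) (beta : 'cV[R]_K) (gamma : R) : R :=
  match y1, y2, y3 with
  | false, false, true => expR (xdb x beta per2 per3) - 1
  | false, true, _ => -1
  | true, false, false => expR (xdb x beta per3 per1)
  | true, false, true => expR (gamma + xdb x beta per2 per1)
  | _, _, _ => 0
  end.

Definition m1a (y1 y2 y3 : bool) (x : 'M[R]_(K, 3)) (beta : 'cV[R]_K) (gamma : R) : R :=
  match y1, y2, y3 with
  | false, true, false => expR (xdb x beta per1 per2 + gamma)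
  | false, true, true => expR (xdb x beta per1 per3)
  | true, false, _ => -1
  | true, true, false => expR (xdb x beta per3 per2) - 1
  | _, _, _ => 0
  end.

Definition m1b (y1 y2 y3 : bool) (x : 'M[R]_(K, 3)) (beta : 'cV[R]_K) (gamma : R) : R :=
  match y1, y2, y3 with
  | false, false, true => expR (xdb x beta per2 per3) - 1
  | false, true, _ => -1
  | true, false, false => expR (xdb x beta per3 per1 - gamma)
  | true, false, true => expR (xdb x beta per2 per1)
  | _, _, _ => 0
  end.

Definition ma (y0 : bool) := if y0 then m1a else m0a.
Definition mb (y0 : bool) := if y0 then m1b else m0b.

Definition condexp (x : 'M[R]_(K, 3)) (beta : 'cV[R]_K) (gamma alpha : R)
  (y0 : bool) (f : bool -> bool -> bool -> R) : R :=
  \sum_(y1 : bool) \sum_(y2 : bool) \sum_(y3 : bool)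
     pathprob x beta gamma alpha y0 y1 y2 y3 * f y1 y2 y3.

End Defs.

(* Main.v *)
Require Import Defs.
From mathcomp Require Import all_boot all_order all_algebra.
From mathcomp Require Import reals. From mathcomp Require Import sequences exp.
From mathcomp Require Import ring lra.
Import Order.TTheory GRing.Theory Num.Theory.
Local Open Scope ring_scope.

Lemma logitpE (R : realType) b (z : R) :
  logitp b z = if b then expR z / (1 + expR z) else 1 / (1 + expR z).
Proof.
rewrite /logitp; case: b => /=.
- have h : (1 - 2 * b2R R true) * z = - z :> R by rewrite /b2R /=; ring.
  rewrite h expRN.
  have hp : 0 < expR z by exact: expR_gt0.
  have n1 : 1 + expR z != 0 by rewrite gt_eqF //; lra.
  have n2 : expR z != 0 by rewrite gt_eqF //.
  have n3 : 1 + (expR z)^-1 != 0 by have := invr_gt0 (expR z); rewrite hp => hi; rewrite gt_eqF //; lra.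
  rewrite -[X in 1 + X]div1r; field.
  by rewrite n1 n2.
- have -> : (1 - 2 * b2R R false) * z = z by rewrite /b2R /=; ring.
  by [].
Qed.

Theorem lemma1 (R : realType) (K : nat) (beta0 : 'cV[R]_K) (gamma0 : R)
  (y0 : bool) (x : 'M[R]_(K, 3)) (alpha : R) :
  condexp x beta0 gamma0 alpha y0 (fun y1 y2 y3 => ma y0 y1 y2 y3 x beta0 gamma0) = 0 /\
  condexp x beta0 gamma0 alpha y0 (fun y1 y2 y3 => mb y0 y1 y2 y3 x beta0 gamma0) = 0.
Proof.
have hd : forall t s, xdb x beta0 t s = (xb x beta0 t + alpha) - (xb x beta0 s + alpha).
  move=> t s.
  have -> : xb x beta0 t + alpha - (xb x beta0 s + alpha) = xb x beta0 t - xb x beta0 s by ring.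
  rewrite /xdb /xb -sumrB; apply: eq_bigr => k _; ring.
have hz : forall t (b : bool), xb x beta0 t + b2R R b * gamma0 + alpha =
   (xb x beta0 t + alpha) + (if b then gamma0 else 0).
  by move=> t [|]; rewrite /b2R /= ?mulr1n ?mulr0n ?mul1r ?mul0r; ring.
rewrite /condexp /pathprob /ma /mb /m0a /m0b /m1a /m1b.
case: y0; rewrite !big_bool /= !hd !hz /= !logitpE ?addr0;
move: (xb x beta0 per1 + alpha) (xb x beta0 per2 + alpha) (xb x beta0 per3 + alpha) => a1 a2 a3;
have p1 := expR_gt0 a1; have p2 := expR_gt0 a2; have p3 := expR_gt0 a3;
have pg := expR_gt0 gamma0; move: p1 p2 p3 pg;
rewrite ?expRD ?expRN;
move: (expR a1) (expR a2) (expR a3) (expR gamma0) => u1 u2 u3 g p1 p2 p3 pg;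
(have n1 : 1 + u1 != 0 by rewrite gt_eqF //; lra);
(have n2 : 1 + u2 != 0 by rewrite gt_eqF //; lra);
(have n3 : 1 + u3 != 0 by rewrite gt_eqF //; lra);
(have m1 : 1 + u1 * g != 0 by have := mulr_gt0 p1 pg; move=> ?; rewrite gt_eqF //; lra);
(have m2 : 1 + u2 * g != 0 by have := mulr_gt0 p2 pg; move=> ?; rewrite gt_eqF //; lra);
(have m3 : 1 + u3 * g != 0 by have := mulr_gt0 p3 pg; move=> ?; rewrite gt_eqF //; lra);
(have q1 : u1 != 0 by rewrite gt_eqF);
(have q2 : u2 != 0 by rewrite gt_eqF);
(have q3 : u3 != 0 by rewrite gt_eqF);
(have qg : g != 0 by rewrite gt_eqF);
split; field; rewrite ?n1 ?n2 ?n3 ?m1 ?m2 ?m3 ?q1 ?q2 ?q3 ?qg //.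
Qed.
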